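(* For every $E\subseteq\mathbb{F}_q^2$, $$\sum_{t\in\mathbb{F}_q^6}\nu_B(t)^2\le \Psi(2,2).$$
   Context: Standing assumptions: $q=p^n$ with $p$ a prime, $p\equiv 3\pmod 4$, $n$ odd. For $x,y\in\mathbb{F}_q^2$, $\|x-y\|=(x_1-y_1)^2+(x_2-y_2)^2$. $O(\mathbb{F}_q^2)$ is the group of $2\times2$ matrices $\theta$ over $\mathbb{F}_q$ with $\theta^T\theta=I$. $\lambda_\theta(w)=|\{(u,v)\in E^2: u-\theta v=w\}|$. For $t\in\mathbb{F}_q^6$, $\nu_B(t)$ is the number of $(x,y,z,u,v)\in E^5$ with $(\|x-y\|,\|x-z\|,\|y-z\|,\|x-u\|,\|x-v\|,\|u-v\|)=t$. For positive integers $a,b$, $$\Psi(a,b)=\sum_{x,x'\in\mathbb{F}_q^2}\ \sum_{\theta,\phi\in O(\mathbb{F}_q^2)}\lambda_\theta(x-\theta x')^a\,\lambda_\phi(x-\phi x')^b.$$ *)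

(* Defs.v *)
From HB Require Import structures.
From mathcomp Require Import all_boot all_order all_algebra.
Set Implicit Arguments. Unset Strict Implicit. Unset Printing Implicit Defensive.
Import GRing.Theory.
Local Open Scope ring_scope.

Section Defs.
Variable F : finFieldType.

Definition pt := 'cV[F]_2.

Definition sqn (x : pt) : F := \sum_(i < 2) x i ord0 ^+ 2.

Definition Ogrp : {set 'M[F]_2} := [set th : 'M[F]_2 | th^T *m th == 1%:M].

Definition lam (E : {set pt}) (th : 'M[F]_2) (w : pt) : nat :=
  #|[set uv : pt * pt | [&& uv.1 \in E, uv.2 \in E & uv.1 - th *m uv.2 == w]]|.

Definition dvec (x y z u v : pt) : 'rV[F]_6 :=
  \row_(i < 6) nth 0 [:: sqn (x - y); sqn (x - z); sqn (y - z);
                         sqn (x - u); sqn (x - v); sqn (u - v)] i.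

Definition nuB (E : {set pt}) (t : 'rV[F]_6) : nat :=
  #|[set w : pt * pt * pt * pt * pt |
      let: (x, y, z, u, v) := w in
      [&& x \in E, y \in E, z \in E, u \in E, v \in E & dvec x y z u v == t]]|.

Definition Psi (E : {set pt}) (a b : nat) : nat :=
  (\sum_(x : pt) \sum_(x' : pt) \sum_(th in Ogrp) \sum_(ph in Ogrp)
     (lam E th (x - th *m x')%R ^ a * lam E ph (x - ph *m x')%R ^ b)%N)%N.
End Defs.

(* Main.v *)
Require Import Defs.
From HB Require Import structures.
From mathcomp Require Import all_boot all_order all_algebra.
From mathcomp Require Import finfield ring lra.
Set Implicit Arguments. Unset Strict Implicit. Unset Printing Implicit Defensive.
Import GRing.Theory.

Section Facts.
Local Open Scope ring_scope.
Variables (F : finFieldType) (p n : nat).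
Hypotheses (hp : prime p) (hp4 : (p %% 4 = 3)%N) (hn : odd n) (hq : #|F| = (p ^ n)%N).

Lemma two_neq0 : (2 : F) != 0.
Proof.
have pc := card_finPcharP hq hp.
have h0 := pcharf0 pc.
apply/eqP => h2.
have hp2 : p = (p %/ 2 * 2 + 1)%N.
  by rewrite {1}(divn_eq p 2); congr (_ + _)%N; rewrite -(modn_dvdm p (_ : 2 %| 4))%N // hp4.
move: h0; rewrite hp2 natrD natrM h2 mulr0 add0r => /eqP; by rewrite oner_eq0.
Qed.

Lemma q_mod4 : (#|F| %% 4 = 3)%N.
Proof.
rewrite hq -modnXm hp4.
rewrite -(odd_double_half n) hn -muln2 mulnC expnD expnM.
by rewrite -modnMm -(modnXm n./2 4 (3^2)) exp1n.
Qed.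

Lemma no_sqrt_m1 (i : F) : i ^+ 2 != -1.
Proof.
apply/eqP => hi.
have := expf_card i.
rewrite (divn_eq #|F| 4) q_mod4 mulnC exprD exprM.
have -> : i ^+ 4 = 1 by rewrite (_ : 4 = 2 + 2)%N // exprD hi mulrNN mulr1.
rewrite expr1n mul1r (_ : 3 = 1 + 2)%N // exprD hi expr1 mulrN1 => /eqP.
rewrite -subr_eq0 -opprD -mulr2n oppr_eq0 -mulr_natr mulf_eq0 (negbTE two_neq0) orbF => /eqP i0.
by move: hi; rewrite i0 expr0n /= => /eqP; rewrite eq_sym oppr_eq0 oner_eq0.
Qed.

Lemma aniso (x y : F) : x ^+ 2 + y ^+ 2 = 0 -> x = 0 /\ y = 0.
Proof.
move=> h.
have [y0|yn0] := eqVneq y 0.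
  by move: h; rewrite y0 expr0n /= addr0 => /eqP; rewrite expf_eq0 /= => /eqP.
have hx : x ^+ 2 = - y ^+ 2 by apply/eqP; rewrite -subr_eq0 opprK h.
exfalso; move: (no_sqrt_m1 (x / y)).
by rewrite expr_div_n hx mulNr divff ?expf_neq0 ?eqxx.
Qed.
End Facts.

Section Ex.
Local Open Scope ring_scope.
Variable F : fieldType.
Definition isoP (m00 m01 m10 m11 : F) :=
  [/\ m00 ^+ 2 +m10 ^+ 2  = 1, m00 * m01+m10 * m11 = 0 & m01 ^+ 2 +m11 ^+ 2  = 1].
Definition mapsP (m00 m01 m10 m11 c1 c2 a1 a2 : F) :=
  m00 * c1+m01 * c2 = a1 /\ m10 * c1+m11 * c2 = a2.
Definition ex_good (a1 a2 b1 b2 c1 c2 d1 d2 : F) := exists m00 m01 m10 m11,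
  [/\ isoP m00 m01 m10 m11, mapsP m00 m01 m10 m11 c1 c2 a1 a2
    & mapsP m00 m01 m10 m11 d1 d2 b1 b2].

Lemma L1 (a1 a2 b1 b2 c1 c2 d1 d2 : F) :
  a1 ^+ 2 +a2 ^+ 2  = c1 ^+ 2 +c2 ^+ 2  -> b1 ^+ 2 +b2 ^+ 2  = d1 ^+ 2 +d2 ^+ 2  ->
  a1 * b1+a2 * b2 = c1 * d1+c2 * d2 -> c1 * d2 - c2 * d1 != 0 ->
  ex_good a1 a2 b1 b2 c1 c2 d1 d2.
Proof.
move=> hA hB hD hd.
set de := c1 * d2 - c2 * d1.
exists ((a1 * d2 - b1 * c2)/de), ((b1 * c1 - a1 * d1)/de), ((a2 * d2 - b2 * c2)/de),
  ((b2 * c1 - a2 * d1)/de).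
have e1 : (a1 * d2 - b1 * c2) ^+ 2  + (a2 * d2 - b2 * c2) ^+ 2  = de ^+ 2 .
  transitivity (d2 ^+ 2  * (a1 ^+ 2 +a2 ^+ 2 ) - 2 * c2 * d2 * (a1 * b1+a2 * b2) + c2 ^+ 2  * (b1 ^+ 2 +b2 ^+ 2 )).
    by ring.
  by rewrite hA hB hD /de; ring.
have e2 : (a1 * d2 - b1 * c2) * (b1 * c1 - a1 * d1) + (a2 * d2 - b2 * c2) * (b2 * c1 - a2 * d1) = 0.
  transitivity (-(d1 * d2) * (a1 ^+ 2 +a2 ^+ 2 ) + (c1 * d2+c2 * d1) * (a1 * b1+a2 * b2) - c1 * c2 * (b1 ^+ 2 +b2 ^+ 2 )).
    by ring.
  by rewrite hA hB hD; ring.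
have e3 : (b1 * c1 - a1 * d1) ^+ 2  + (b2 * c1 - a2 * d1) ^+ 2  = de ^+ 2 .
  transitivity (c1 ^+ 2  * (b1 ^+ 2 +b2 ^+ 2 ) - 2 * c1 * d1 * (a1 * b1+a2 * b2) + d1 ^+ 2  * (a1 ^+ 2 +a2 ^+ 2 )).
    by ring.
  by rewrite hA hB hD /de; ring.
split; [split|split|split].
- by rewrite !expr_div_n -mulrDl e1 divff // expf_neq0.
- by rewrite !mulf_div -mulrDl e2 mul0r.
- by rewrite !expr_div_n -mulrDl e3 divff // expf_neq0.
- by rewrite /de; field.
- by rewrite /de; field.
- by rewrite /de; field.
- by rewrite /de; field.
Qed.

Hypothesis hani : forall x y : F, x ^+ 2 + y ^+ 2 = 0 -> x = 0 /\ y = 0.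

Lemma L3 (a1 a2 b1 b2 c1 c2 d1 d2 : F) :
  a1 ^+ 2 + a2 ^+ 2 = c1 ^+ 2 + c2 ^+ 2 -> b1 ^+ 2 + b2 ^+ 2 = d1 ^+ 2 + d2 ^+ 2 ->
  a1 * b1 + a2 * b2 = c1 * d1 + c2 * d2 -> c1 * d2 - c2 * d1 = 0 ->
  c1 ^+ 2 + c2 ^+ 2 != 0 ->
  ex_good a1 a2 b1 b2 c1 c2 d1 d2.
Proof.
move=> hA hB hD hd hc.
have [m00 [m01 [m10 [m11 [hI [h1 h2] _]]]]] :
    ex_good a1 a2 (- a2) a1 c1 c2 (- c2) c1.
  apply: L1 => //.
  - by rewrite sqrrN addrC hA addrC sqrrN.
  - by ring.
  - by rewrite (_ : c1 * c1 - c2 * - c2 = c1 ^+ 2 + c2 ^+ 2) //; ring.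
set t := (c1 * d1 + c2 * d2) / (c1 ^+ 2 + c2 ^+ 2).
have ed : (d1 - t * c1) ^+ 2 + (d2 - t * c2) ^+ 2 = 0.
  have -> : (d1 - t * c1) ^+ 2 + (d2 - t * c2) ^+ 2 =
     (c1 * d2 - c2 * d1) ^+ 2 / (c1 ^+ 2 + c2 ^+ 2) by rewrite /t; field.
  by rewrite hd expr0n mul0r.
have eb : (b1 - t * a1) ^+ 2 + (b2 - t * a2) ^+ 2 = 0.
  rewrite -ed.
  transitivity ((b1 ^+ 2 + b2 ^+ 2) - 2 * t * (a1 * b1 + a2 * b2) + t ^+ 2 * (a1 ^+ 2 + a2 ^+ 2)).
    by ring.
  by rewrite hA hB hD; ring.
have [d1e d2e] := hani ed.
have [b1e b2e] := hani eb.
move/subr0_eq: d1e => d1e; move/subr0_eq: d2e => d2e.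
move/subr0_eq: b1e => b1e; move/subr0_eq: b2e => b2e.
exists m00, m01, m10, m11; split => //; split.
- by rewrite d1e d2e b1e -h1; ring.
- by rewrite d1e d2e b2e -h2; ring.
Qed.

Lemma exO (a1 a2 b1 b2 c1 c2 d1 d2 : F) :
  a1 ^+ 2 + a2 ^+ 2 = c1 ^+ 2 + c2 ^+ 2 -> b1 ^+ 2 + b2 ^+ 2 = d1 ^+ 2 + d2 ^+ 2 ->
  a1 * b1 + a2 * b2 = c1 * d1 + c2 * d2 ->
  ex_good a1 a2 b1 b2 c1 c2 d1 d2.
Proof.
move=> hA hB hD.
have [hd|hd] := eqVneq (c1 * d2 - c2 * d1) 0; last exact: L1.
have [hc|hc] := eqVneq (c1 ^+ 2 + c2 ^+ 2) 0; last exact: L3.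
have [hdd|hdd] := eqVneq (d1 ^+ 2 + d2 ^+ 2) 0.
  have [a10 a20] : a1 = 0 /\ a2 = 0 by apply: hani; rewrite hA.
  have [b10 b20] : b1 = 0 /\ b2 = 0 by apply: hani; rewrite hB.
  have [c10 c20] := hani hc.
  have [d10 d20] := hani hdd.
  exists 1, 0, 0, 1; rewrite a10 a20 b10 b20 c10 c20 d10 d20.
  by split; [split|split|split]; ring.
have [m00 [m01 [m10 [m11 [hI h1 h2]]]]] : ex_good b1 b2 a1 a2 d1 d2 c1 c2.
  apply: L3 => //.
  - by rewrite mulrC [b2 * _]mulrC hD; ring.
  - by rewrite -oppr0 -hd; ring.
by exists m00, m01, m10, m11.
Qed.
End Ex.

Section Br.
Local Open Scope ring_scope.
Variable F : finFieldType.
Definition i1 : 'I_2 := lift ord0 ord0.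
Definition mk2 (m00 m01 m10 m11 : F) : 'M[F]_2 := \matrix_(i, j)
  if i == ord0 then (if j == ord0 then m00 else m01) else (if j == ord0 then m10 else m11).

Lemma sqnE (w : pt F) : sqn w = w ord0 ord0 ^+ 2 + w i1 ord0 ^+ 2.
Proof. by rewrite /sqn !big_ord_recl big_ord0 addr0. Qed.

Lemma ord2P (P : 'I_2 -> Prop) : P ord0 -> P i1 -> forall i, P i.
Proof.
move=> h0 h1 [[|[|k]] hi].
- by rewrite (_ : Ordinal hi = ord0) //; apply: val_inj.
- by rewrite (_ : Ordinal hi = i1) //; apply: val_inj.
- by [].
Qed.

Lemma pt_eq (a b : pt F) : a ord0 ord0 = b ord0 ord0 -> a i1 ord0 = b i1 ord0 -> a = b.
Proof.
move=> h0 h1; apply/matrixP => i j; rewrite (ord1 j).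
by elim/ord2P: i.
Qed.

Lemma mk2_mul0 m00 m01 m10 m11 (c : pt F) :
  (mk2 m00 m01 m10 m11 *m c) ord0 ord0 = m00 * c ord0 ord0 + m01 * c i1 ord0.
Proof. by rewrite mxE !big_ord_recl big_ord0 addr0 !mxE. Qed.

Lemma mk2_mul1 m00 m01 m10 m11 (c : pt F) :
  (mk2 m00 m01 m10 m11 *m c) i1 ord0 = m10 * c ord0 ord0 + m11 * c i1 ord0.
Proof. by rewrite mxE !big_ord_recl big_ord0 addr0 !mxE. Qed.

Lemma mk2_O m00 m01 m10 m11 : isoP m00 m01 m10 m11 -> mk2 m00 m01 m10 m11 \in Ogrp F.
Proof.
case=> h1 h2 h3; rewrite inE; apply/eqP/matrixP => i j.
rewrite !mxE !big_ord_recl big_ord0 addr0 !mxE.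
elim/ord2P: i; elim/ord2P: j => /=.
- by rewrite -!expr2.
- by [].
- by rewrite mulrC [m11 * _]mulrC.
- by rewrite -!expr2.
Qed.

Hypothesis two0 : (2 : F) != 0.
Hypothesis hani : forall x y : F, x ^+ 2 + y ^+ 2 = 0 -> x = 0 /\ y = 0.

Lemma exOv (a b c d : pt F) : sqn a = sqn c -> sqn b = sqn d ->
  sqn (a - b) = sqn (c - d) ->
  exists2 th, th \in Ogrp F & th *m c = a /\ th *m d = b.
Proof.
rewrite !sqnE !mxE => hA hB hD.
have hD' : a ord0 ord0 * b ord0 ord0 + a i1 ord0 * b i1 ord0 =
           c ord0 ord0 * d ord0 ord0 + c i1 ord0 * d i1 ord0.
  apply: (mulfI two0).
  transitivity ((a ord0 ord0 ^+ 2 + a i1 ord0 ^+ 2) + (b ord0 ord0 ^+ 2 + b i1 ord0 ^+ 2)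
     - ((a ord0 ord0 - b ord0 ord0) ^+ 2 + (a i1 ord0 - b i1 ord0) ^+ 2)); first by ring.
  rewrite hA hB hD; ring.
have [m00 [m01 [m10 [m11 [hI [h1 h2] [h3 h4]]]]]] := exO hani hA hB hD'.
exists (mk2 m00 m01 m10 m11); first exact: mk2_O.
split; apply: pt_eq; by rewrite ?mk2_mul0 ?mk2_mul1.
Qed.
End Br.
Lemma pairE (I J : finType) (G : I * J -> nat) :
  (\sum_k G k = \sum_i \sum_j G (i, j))%N.
Proof. by rewrite pair_big /=; apply: eq_big => // -[i j]. Qed.

Lemma sigma_card (K V : finType) (C : K -> {set V}) :
  #|[set kv : K * V | kv.2 \in C kv.1]| = (\sum_k #|C k|)%N.
Proof.
rewrite -sum1_card big_mkcond /= pairE; apply: eq_bigr => k _.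
rewrite -sum1_card [RHS]big_mkcond; apply: eq_bigr => v _; by rewrite inE.
Qed.

Lemma card_le (T K V : finType) (A : {set T}) (C : K -> {set V}) (g : T -> K * V) :
  {in A &, injective g} -> (forall t, t \in A -> (g t).2 \in C (g t).1) ->
  (#|A| <= \sum_k #|C k|)%N.
Proof.
move=> ginj hg; rewrite -sigma_card -(card_in_imset ginj).
apply: subset_leq_card; apply/subsetP => y /imsetP [t tA ->].
by rewrite inE; apply: hg.
Qed.
Section Main.
Variable F : finFieldType.
Local Open Scope ring_scope.
Hypothesis two0 : (2 : F) != 0.
Hypothesis hani : forall x y : F, x ^+ 2 + y ^+ 2 = 0 -> x = 0 /\ y = 0.

Definition pk (a b c d : pt F) : 'M[F]_2 :=
  odflt 1%:M [pick th in Ogrp F | (th *m c == a) && (th *m d == b)].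

Lemma pkP (a b c d : pt F) : sqn a = sqn c -> sqn b = sqn d ->
  sqn (a - b) = sqn (c - d) ->
  [/\ pk a b c d \in Ogrp F, pk a b c d *m c = a & pk a b c d *m d = b].
Proof.
move=> hA hB hD; rewrite /pk; case: pickP => [th /andP[hO /andP[/eqP h1 /eqP h2]] | H] /=.
  by split.
have [th hO [h1 h2]] := exOv two0 hani hA hB hD.
by move: (H th); rewrite hO h1 h2 !eqxx.
Qed.

Lemma sqnB (a b : pt F) : sqn (a - b) = sqn (b - a).
Proof. by rewrite !sqnE !mxE; ring. Qed.

Lemma tri (x y z x' y' z' : pt F) : sqn (x - y) = sqn (x' - y') ->
  sqn (x - z) = sqn (x' - z') -> sqn (y - z) = sqn (y' - z') ->
  let th := pk (y - x) (z - x) (y' - x') (z' - x') in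
  [/\ th \in Ogrp F, y - th *m y' = x - th *m x' & z - th *m z' = x - th *m x'].
Proof.
move=> h1 h2 h3 th.
have e (a b c : pt F) : (a - c) - (b - c) = a - b by rewrite opprB addrA subrK.
have hA : sqn (y - x) = sqn (y' - x') by rewrite sqnB h1 sqnB.
have hB : sqn (z - x) = sqn (z' - x') by rewrite sqnB h2 sqnB.
have hD : sqn ((y - x) - (z - x)) = sqn ((y' - x') - (z' - x')) by rewrite !e.
have [hO ey ez] := pkP hA hB hD.
rewrite -/th in hO ey ez.
have f (w w' : pt F) : th *m (w' - x') = w - x -> w - th *m w' = x - th *m x'.
  rewrite mulmxBr => h; apply/eqP; rewrite subr_eq -addrA addrC -subr_eq -h.
  by rewrite addrC.
by split => //; apply: f.
Qed.
End Main.

Section Count.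
Variable F : finFieldType.
Variable E : {set pt F}.
Local Open Scope ring_scope.
Hypothesis two0 : (2 : F) != 0.
Hypothesis hani : forall x y : F, x ^+ 2 + y ^+ 2 = 0 -> x = 0 /\ y = 0.

Definition P5 := (pt F * pt F * pt F * pt F * pt F)%type.
Definition S5 (t : 'rV[F]_6) : {set P5} :=
  [set w : pt F * pt F * pt F * pt F * pt F |
      let: (x, y, z, u, v) := w in
      [&& x \in E, y \in E, z \in E, u \in E, v \in E & dvec x y z u v == t]].

Definition Sl (th : 'M[F]_2) (w : pt F) : {set pt F * pt F} :=
  [set uv : pt F * pt F | [&& uv.1 \in E, uv.2 \in E & uv.1 - th *m uv.2 == w]].

Definition V4 := ((pt F * pt F) * (pt F * pt F) * ((pt F * pt F) * (pt F * pt F)))%type.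
Definition K4 := (pt F * (pt F * ('M[F]_2 * 'M[F]_2)))%type.

Definition KC (k : K4) : {set V4} :=
  let: (x, (x', (th, ph))) := k in
  if (th \in Ogrp F) && (ph \in Ogrp F) then
    setX (setX (Sl th (x - th *m x')) (Sl th (x - th *m x')))
         (setX (Sl ph (x - ph *m x')) (Sl ph (x - ph *m x')))
  else set0.

Definition gmap (tw : 'rV[F]_6 * (P5 * P5)) : K4 * V4 :=
  let: (_, (((((x, y), z), u), v), ((((x', y'), z'), u'), v'))) := tw in
  ((x, (x', (pk (y - x) (z - x) (y' - x') (z' - x'),
             pk (u - x) (v - x) (u' - x') (v' - x')))),
   (((y, y'), (z, z')), ((u, u'), (v, v')))).

Lemma PsiE : Psi E 2 2 = (\sum_k #|KC k|)%N.
Proof.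
rewrite /Psi pairE; apply: eq_bigr => x _; rewrite pairE; apply: eq_bigr => x' _.
rewrite pairE [LHS]big_mkcond; apply: eq_bigr => th _.
case hth: (th \in Ogrp F).
  rewrite [LHS]big_mkcond; apply: eq_bigr => ph _; rewrite /KC hth /=.
  case: (ph \in Ogrp F) => //=; first by rewrite !cardsX -!mulnn.
  by rewrite cards0.
by rewrite big1 // => ph _; rewrite /KC hth cards0.
Qed.

Lemma main_ineq : (\sum_(t : 'rV[F]_6) nuB E t ^ 2 <= Psi E 2 2)%N.
Proof.
have -> : (\sum_(t : 'rV[F]_6) nuB E t ^ 2)%N =
    #|[set tw : 'rV[F]_6 * (P5 * P5) | tw.2 \in setX (S5 tw.1) (S5 tw.1)]|.
  rewrite (sigma_card (fun t => setX (S5 t) (S5 t))); apply: eq_bigr => t _.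
  by rewrite cardsX mulnn.
rewrite PsiE; apply: (card_le (g := gmap)).
  move=> [t1 [[[[[x1 y1] z1] u1] v1] [[[[x1' y1'] z1'] u1'] v1']]].
  move=> [t2 [[[[[x2 y2] z2] u2] v2] [[[[x2' y2'] z2'] u2'] v2']]] h1 h2.
  case=> e1 e2 _ _ e3 e4 e5 e6 e7 e8 e9 e10; subst.
  move: h1 h2; rewrite !inE /= => /andP[/and5P[_ _ _ _ /andP[_ /eqP <-]] _].
  by move=> /andP[/and5P[_ _ _ _ /andP[_ /eqP ->]] _].
move=> [t [[[[[x y] z] u] v] [[[[x' y'] z'] u'] v']]].
rewrite !inE /= => /andP[/and5P[xE yE zE uE /andP[vE /eqP dv]] /and5P[xE' yE' zE' uE' /andP[vE' /eqP dv']]].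
have q k := congr1 (fun M : 'rV[F]_6 => M ord0 k) (etrans dv (esym dv')).
have d1 := q (@Ordinal 6 0 isT); have d2 := q (@Ordinal 6 1 isT).
have d3 := q (@Ordinal 6 2 isT); have d4 := q (@Ordinal 6 3 isT).
have d5 := q (@Ordinal 6 4 isT); have d6 := q (@Ordinal 6 5 isT).
rewrite /= !mxE /= in d1 d2 d3 d4 d5 d6.
have [O1 ey ez] := tri two0 hani d1 d2 d3.
have [O2 eu ev] := tri two0 hani d4 d5 d6.
rewrite /gmap /KC /= O1 O2 /= !in_setX !inE /=.
by rewrite yE zE uE vE yE' zE' uE' vE' ey ez eu ev !eqxx.
Qed.
End Count.

Theorem lemma3p1 (F : finFieldType) (p n : nat)
  (hp : prime p) (hp4 : p %% 4 = 3) (hn : odd n) (hq : #|F| = p ^ n)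
  (E : {set pt F}) :
  (\sum_(t : 'rV[F]_6) nuB E t ^ 2 <= Psi E 2 2)%N.
Proof.
apply: main_ineq.
- exact: two_neq0 hp hp4 hq.
- move=> x y; exact: (aniso hp hp4 hn hq).
Qed.
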